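(* If there is no infinite $T$-rewrite sequence starting from any string of the canonical form $\lhd w\rhd$ with $w\in\{0_2,1_2,0_3,1_3,2_3\}^*$, then $T$ is terminating (on all strings over its alphabet).
   Context: A string rewriting system (SRS) $R$ over an alphabet $\Sigma$ is a set of pairs $\ell\to r$ of strings; it induces the rewrite relation $u\ell v\to_R urv$ ($u,v\in\Sigma^*$). $R$ is terminating if there is no infinite sequence $s_0\to_R s_1\to_R\cdots$. Alphabet: $\{0_2,1_2,0_3,1_3,2_3,\lhd,\rhd\}$. $T=D_T\cup A\cup B$ where $D_T=\{0_2\rhd\to\rhd,\ 1_2\rhd\to 2_3\rhd\}$; $A=\{0_20_3\to0_30_2,\ 0_21_3\to0_31_2,\ 0_22_3\to1_30_2,\ 1_20_3\to1_31_2,\ 1_21_3\to2_30_2,\ 1_22_3\to2_31_2\}$; $B=\{\lhd0_3\to\lhd1_2,\ \lhd1_3\to\lhd0_20_2,\ \lhd2_3\to\lhd0_21_2\}$. *)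

(* Defs.v *)
From Stdlib Require Import List.
Import ListNotations.

Inductive sym : Type := s02 | s12 | s03 | s13 | s23 | lt_ | rt_.
(* s02 = 0_2, s12 = 1_2, s03 = 0_3, s13 = 1_3, s23 = 2_3, lt_ = ◁, rt_ = ▷ *)

Definition word := list sym.

Definition rules_T : list (word * word) :=
  [ ([s02; rt_], [rt_]);
    ([s12; rt_], [s23; rt_]);
    ([s02; s03], [s03; s02]);
    ([s02; s13], [s03; s12]);
    ([s02; s23], [s13; s02]);
    ([s12; s03], [s13; s12]);
    ([s12; s13], [s23; s02]);
    ([s12; s23], [s23; s12]);
    ([lt_; s03], [lt_; s12]);
    ([lt_; s13], [lt_; s02; s02]);
    ([lt_; s23], [lt_; s02; s12]) ].

Definition stepT (s t : word) : Prop :=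
  exists u v l r, In (l, r) rules_T /\ s = u ++ l ++ v /\ t = u ++ r ++ v.

Definition infinite_from (s : word) : Prop :=
  exists f : nat -> word, f 0 = s /\ forall n, stepT (f n) (f (S n)).

Definition terminatingT : Prop := forall s, ~ infinite_from s.

Definition inner_sym (a : sym) : Prop := a <> lt_ /\ a <> rt_.

(* Main.v *)
Require Import Defs.
From Stdlib Require Import List.
Import ListNotations.
From Stdlib Require Import Classical ClassicalEpsilon Lia Arith.

Definition SN (s : word) : Prop := Acc (fun t s => stepT s t) s.

Lemma notSN_step s : ~ SN s -> exists t, stepT s t /\ ~ SN t.
Proof.
  intro H. apply NNPP. intro H'. apply H. constructor. intros t Ht.
  apply NNPP. intro Hn. apply H'. eauto.
Qed.

Lemma notSN_inf s : ~ SN s -> infinite_from s.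
Proof.
  intro H.
  set (T := {x : word | ~ SN x}).
  assert (g : T -> T).
  { intros [x Hx]. destruct (constructive_indefinite_description _ (notSN_step x Hx)) as [t [_ Ht]].
    exact (exist _ t Ht). }
  clear g.
  set (g := fun p : T => let (x, Hx) := p in
       let (t, Ht) := constructive_indefinite_description _ (notSN_step x Hx) in
       exist (fun x => ~ SN x) t (proj2 Ht)).
  assert (Hg : forall p, stepT (proj1_sig p) (proj1_sig (g p))).
  { intros [x Hx]. simpl. destruct (constructive_indefinite_description _ (notSN_step x Hx)) as [t [Hs Ht]]. simpl. exact Hs. }
  exists (fun n => proj1_sig (Nat.iter n g (exist _ s H))). split.
  - reflexivity.
  - intro n. simpl. apply Hg.
Qed.

Lemma step_ctx x s t y : stepT s t -> stepT (x ++ s ++ y) (x ++ t ++ y).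
Proof.
  intros (u & v & l & r & Hin & -> & ->).
  exists (x ++ u), (v ++ y), l, r. split; [exact Hin|].
  split; rewrite !app_assoc; reflexivity.
Qed.

Lemma SN_ctx x s y : SN (x ++ s ++ y) -> SN s.
Proof.
  intro H. remember (x ++ s ++ y) as w eqn:Hw. revert s Hw.
  induction H as [w _ IH]. intros s ->. constructor. intros t Hst.
  eapply IH; [apply step_ctx; exact Hst | reflexivity].
Qed.

Lemma rule_shape l r : In (l, r) rules_T ->
  exists x y, l = [x; y] /\ x <> rt_ /\ y <> lt_.
Proof.
  simpl; intros H; repeat destruct H as [H|H]; inversion H; subst;
  (eexists; eexists; split; [reflexivity| split; discriminate]).
Qed.

Lemma rule_rt l r : In (l, r) rules_T -> forall l0, l = l0 ++ [rt_] -> exists r0, r = r0 ++ [rt_].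
Proof.
  simpl; intros H; repeat destruct H as [H|H]; inversion H; subst; intros l0 Heq;
  (destruct l0 as [|? [|? [|]]]; simpl in Heq; inversion Heq; subst);
  first [exists []; reflexivity | exists [s23]; reflexivity | idtac].
Qed.

Lemma rule_lt l r : In (l, r) rules_T -> forall l0, l = lt_ :: l0 -> exists r0, r = lt_ :: r0.
Proof.
  simpl; intros H; repeat destruct H as [H|H]; inversion H; subst; intros l0 Heq;
  inversion Heq; eexists; reflexivity.
Qed.

Definition ends_rt (a : word) := exists a0, a = a0 ++ [rt_].
Definition starts_lt (b : word) := exists b0, b = lt_ :: b0.

Lemma ends_rt_step a a' : stepT a a' -> ends_rt a -> ends_rt a'.
Proof.
  intros (u & v & l & r & Hin & -> & ->) [a0 Ha].
  destruct v as [|z v] using rev_ind.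
  - destruct (rule_shape _ _ Hin) as (x & y & -> & _ & _).
    rewrite app_nil_r in Ha.
    replace (u ++ [x; y]) with ((u ++ [x]) ++ [y]) in Ha by (rewrite <- app_assoc; reflexivity).
    apply app_inj_tail in Ha. destruct Ha as [_ ->].
    destruct (rule_rt _ _ Hin [x] eq_refl) as [r0 ->].
    exists (u ++ r0). rewrite app_nil_r, app_assoc. reflexivity.
  - rewrite !app_assoc in Ha. apply app_inj_tail in Ha. destruct Ha as [_ ->].
    exists (u ++ r ++ v). rewrite !app_assoc. reflexivity.
Qed.

Lemma starts_lt_step b b' : stepT b b' -> starts_lt b -> starts_lt b'.
Proof.
  intros (u & v & l & r & Hin & -> & ->) [b0 Hb].
  destruct u as [|z u].
  - simpl in *. destruct (rule_shape _ _ Hin) as (x & y & -> & _ & _).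
    simpl in Hb. inversion Hb; subst.
    destruct (rule_lt _ _ Hin [y] eq_refl) as [r0 ->]. eexists; reflexivity.
  - simpl in Hb. inversion Hb; subst. eexists; reflexivity.
Qed.

Lemma step_split a b t : stepT (a ++ b) t -> (ends_rt a \/ starts_lt b) ->
  (exists a', stepT a a' /\ t = a' ++ b) \/ (exists b', stepT b b' /\ t = a ++ b').
Proof.
  intros (u & v & l & r & Hin & Hs & ->) Hinv.
  destruct (rule_shape _ _ Hin) as (x & y & -> & Hx & Hy).
  apply app_eq_app in Hs. destruct Hs as [m [[Ha Hb] | [Hu Hb]]].
  - destruct m as [|z [|z' m]].
    + subst. rewrite app_nil_r. right. exists (r ++ v). split; [|reflexivity].
      exists [], v, [x;y], r. simpl in *. subst. auto.
    + simpl in Hb. inversion Hb; subst. exfalso.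
      destruct Hinv as [[a0 Ha0] | [b0 Hb0]].
      * apply app_inj_tail in Ha0. destruct Ha0. congruence.
      * inversion Hb0. congruence.
    + simpl in Hb. inversion Hb; subst. left. exists (u ++ r ++ m). split.
      * exists u, m, [z; z'], r. auto.
      * rewrite !app_assoc. reflexivity.
  - subst. right. exists (m ++ r ++ v). split.
    + exists m, v, [x;y], r. auto.
    + rewrite !app_assoc. reflexivity.
Qed.

Lemma SN_app a b : SN a -> SN b -> (ends_rt a \/ starts_lt b) -> SN (a ++ b).
Proof.
  intro Ha. revert b. induction Ha as [a _ IHa].
  intros b Hb. induction Hb as [b Hb' IHb]. intros Hinv.
  constructor. intros t Ht.
  destruct (step_split _ _ _ Ht Hinv) as [(a' & Hs & ->) | (b' & Hs & ->)].
  - apply IHa; [exact Hs | constructor; exact Hb' |].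
    destruct Hinv; [left; eapply ends_rt_step; eauto | right; auto].
  - apply IHb; [exact Hs|].
    destruct Hinv; [left; auto | right; eapply starts_lt_step; eauto].
Qed.

Lemma decomp s : Forall inner_sym s \/ exists x r, Forall inner_sym x /\ (s = x ++ rt_ :: r \/ s = x ++ lt_ :: r).
Proof.
  induction s as [|c s IH].
  - left; constructor.
  - destruct c eqn:Ec;
    try (right; exists [], s; split; [constructor | simpl; auto]; fail);
    (destruct IH as [IH | (x & r & Hx & Hs)];
     [left; constructor; [split; discriminate | exact IH]
     | right; exists (c :: x), r; subst c; split;
       [constructor; [split; discriminate | exact Hx] | destruct Hs as [->| ->]; simpl; auto]]).
Qed.

Theorem mainTheorem5 :
  (forall w : word, Forall inner_sym w -> ~ infinite_from ([lt_] ++ w ++ [rt_])) ->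
  terminatingT.
Proof.
  intros H.
  assert (Hb : forall x, Forall inner_sym x -> SN ([lt_] ++ x ++ [rt_])).
  { intros x Hx. apply NNPP. intro Hn. exact (H x Hx (notSN_inf _ Hn)). }
  assert (Hall : forall n s, length s < n -> SN s /\ SN (lt_ :: s)).
  { induction n as [|n IHn]; intros s Hl; [simpl in Hl; lia|].
    destruct (decomp s) as [Hs | (x & r & Hx & [-> | ->])].
    - split.
      + apply (SN_ctx [lt_] s [rt_]). apply Hb, Hs.
      + apply (SN_ctx [] (lt_ :: s) [rt_]). apply Hb, Hs.
    - rewrite length_app in Hl. simpl in Hl.
      destruct (IHn r ltac:(lia)) as [Hr _].
      split.
      + replace (x ++ rt_ :: r) with ((x ++ [rt_]) ++ r) by (rewrite <- app_assoc; reflexivity).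
        apply SN_app; [apply (SN_ctx [lt_] (x ++ [rt_]) []); rewrite app_nil_r; apply Hb, Hx | exact Hr |].
        left. exists x. reflexivity.
      + replace (lt_ :: x ++ rt_ :: r) with (([lt_] ++ x ++ [rt_]) ++ r) by (simpl; rewrite <- app_assoc; reflexivity).
        apply SN_app; [apply Hb, Hx | exact Hr |].
        left. exists (lt_ :: x). reflexivity.
    - rewrite length_app in Hl. simpl in Hl.
      destruct (IHn r ltac:(lia)) as [_ Hr].
      split.
      + apply SN_app; [apply (SN_ctx [lt_] x [rt_]); apply Hb, Hx | exact Hr |].
        right. eexists; reflexivity.
      + change (lt_ :: x ++ lt_ :: r) with ((lt_ :: x) ++ lt_ :: r).
        apply SN_app; [apply (SN_ctx [] (lt_ :: x) [rt_]); apply Hb, Hx | exact Hr |].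
        right. eexists; reflexivity. }
  intros s [f [Hf0 Hf]].
  assert (Hs : SN s) by (apply (proj1 (Hall (S (length s)) s ltac:(lia)))).
  rewrite <- Hf0 in Hs.
  assert (Hgen : forall w, SN w -> forall n, f n = w -> False).
  { intros w Hw. induction Hw as [w _ IH]. intros n Hn.
    apply (IH (f (S n))) with (n := S n); [rewrite <- Hn; apply Hf | reflexivity]. }
  exact (Hgen _ Hs 0 eq_refl).
Qed.
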